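(* Let $\theta_0:\mathbb{R}^d\to\mathbb{R}^{d_\theta}$ be measurable and, for each $N\ge1$, let $\hat\theta_N:\mathbb{R}^d\to\mathbb{R}^{d_\theta}$ be a (possibly random) estimator built from data independent of $X^s$ and $X^t$. Suppose (i) $\|\hat\theta_N(X^s)\|_\infty\le\xi_N$ almost surely for every $N\ge1$; (ii) $\mathbb{E}\|\theta_0(X^s)\|_\infty^4<\infty$; (iii) $r_0(X^s)$ is sub-exponentially distributed. Then for $N\ge2$, $$\mathbb{E}\|\hat\theta_N(X^t)-\theta_0(X^t)\|_2^2=\mathbb{E}\big[\|\hat\theta_N(X^s)-\theta_0(X^s)\|_2^2\,r_0(X^s)\big]\le c_1\,\mathbb{E}\|\hat\theta_N(X^s)-\theta_0(X^s)\|_2^2\log N+\frac{c_2d_\theta(\xi_N^2+1)}{N},$$ with constants $c_1,c_2$ not depending on $N$.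
   Context: $X^s,X^t$ are random vectors in $\mathbb{R}^d$ with Lebesgue densities $p,q$, $\{q>0\}\subset\{p>0\}$, and density ratio $r_0=q/p$ (with $0/0=0$). A real random variable $V$ is sub-exponentially distributed if $\mathbb{E}\exp(\varsigma|V|)<\infty$ for some $\varsigma>0$. Expectations are over both the test point and the randomness of $\hat\theta_N$. *)

(* Defs.v *)
From HB Require Import structures.
From mathcomp Require Import all_boot all_order all_algebra.
From mathcomp Require Import all_classical all_reals all_analysis.
Import Order.TTheory GRing.Theory Num.Theory.
Set Implicit Arguments.
Unset Strict Implicit.
Unset Printing Implicit Defensive.
Local Open Scope classical_set_scope.
Local Open Scope ring_scope.

(** Euclidean space R^n as a measurable space:
    R^0 = unit, R^(n+1) = R * R^n, with the product (Borel) sigma-algebra. *)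
Fixpoint Rpow_pack (R : realType) (n : nat) :
    {d : measure_display & measurableType d} :=
  match n with
  | 0 => existT _ _ (unit : measurableType _)
  | n.+1 => existT _ _
      ((measurableTypeR R * projT2 (Rpow_pack R n))%type : measurableType _)
  end.

Definition Rpow (R : realType) (n : nat) :
  measurableType (projT1 (Rpow_pack R n)) := projT2 (Rpow_pack R n).
Arguments Rpow : clear implicits.

Fixpoint lebRpow (R : realType) (n : nat) : set (Rpow R n) -> \bar R :=
  match n return set (Rpow R n) -> \bar R with
  | 0 => @dirac _ unit tt R
  | n.+1 => (@lebesgue_measure R \x @lebRpow R n)%E
  end.
Arguments lebRpow : clear implicits.

Definition linf (R : realType) (k : nat) (v : 'rV[R]_k) : R :=
  \big[Order.max/0]_(i < k) `|v ord0 i|.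

Definition sqnorm2 (R : realType) (k : nat) (v : 'rV[R]_k) : R :=
  \sum_(i < k) (v ord0 i) ^+ 2.

Definition is_density (R : realType) (n : nat) (p : Rpow R n -> R) : Prop :=
  [/\ measurable_fun setT p, (forall x, 0 <= p x) &
      (\int[lebRpow R n]_x (p x)%:E = 1)%E].

(** density ratio r0 = q / p with the convention 0/0 = 0 *)
Definition dratio (R : realType) (n : nat) (p q : Rpow R n -> R)
  (x : Rpow R n) : R :=
  if p x == 0 then 0 else q x / p x.

(* Main.v *)
Require Import Defs.
From HB Require Import structures.
From mathcomp Require Import all_boot all_order all_algebra.
From mathcomp Require Import all_classical all_reals all_analysis.
From mathcomp Require Import measurable_realfun ring lra.
Import Order.TTheory GRing.Theory Num.Theory.
Local Open Scope classical_set_scope.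
Local Open Scope ring_scope.

Lemma measurable_inv (R : realType) : measurable_fun setT (@GRing.inv R).
Proof.
have -> : (@GRing.inv R) = fun x => if x == 0 then 0 else x^-1.
  by apply/funext => x; case: eqP => // ->; rewrite invr0.
apply: measurable_fun_if => //.
- exact: (@measurable_fun_eqr _ _ _ setT id (cst 0)).
- apply: (@measurable_funS _ _ _ _ [set x : R | x != 0]) => //.
  + by apply: open_measurable; exact: open_neq.
  + by move=> x [_ /= H]; apply/negbT.
  + apply: open_continuous_measurable_fun; first exact: open_neq.
    by move=> x; rewrite inE => hx; exact: inv_continuous.
Qed.

Section G.
Context (dT : measure_display) (T : measurableType dT) (R : realType).
Lemma measurable_bigmax (k : nat) (g : 'I_k -> T -> R) :
  (forall i, measurable_fun setT (g i)) ->
  measurable_fun setT (fun x => \big[Order.max/0]_(i < k) `|g i x|).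
Proof.
move=> mg; elim: (index_enum _) => [|i s IH].
  under eq_fun do rewrite big_nil. exact: measurable_cst.
under eq_fun do rewrite big_cons.
apply: measurable_maxr; last exact: IH.
apply: measurableT_comp; [exact: normr_measurable|exact: mg].
Qed.
End G.
Arguments measurable_bigmax {dT T R k}.

Section K.
Variable R : realType.

Lemma F1 (s r : R) : 0 < s -> 0 <= r -> r <= 2 / s * expR (s * r / 2).
Proof.
move=> s0 r0.
have h : s * r / 2 <= expR (s * r / 2) by have := expR_ge1Dx (s * r / 2); lra.
have e : 2 / s * (s * r / 2) = r by field; lra.
rewrite -{1}e; apply: ler_wpM2l => //; apply: divr_ge0; lra.
Qed.

Lemma F2 (s r : R) : 0 < s -> 0 <= r -> r ^+ 2 <= 16 / s ^+ 2 * expR (s * r / 2).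
Proof.
move=> s0 r0.
have -> : s * r / 2 = s * r / 4 + s * r / 4 by field.
rewrite expRD.
have h := expR_ge1Dx (s * r / 4).
have h0 : 0 <= s * r / 4 by apply: divr_ge0 => //; apply: mulr_ge0 => //; lra.
have h1 : s * r / 4 <= expR (s * r / 4) by lra.
have h2 : (s * r / 4) ^+ 2 <= expR (s * r / 4) * expR (s * r / 4).
  by rewrite expr2; apply: ler_pM.
have -> : r ^+ 2 = 16 / s ^+ 2 * (s * r / 4) ^+ 2 by field; lra.
apply: ler_wpM2l => //; apply: divr_ge0; [lra| exact: sqr_ge0].
Qed.

Lemma key (s t n fv r th xi dth : R) :
  0 < s -> 0 <= t -> 1 <= n -> expR (s * t / 2) = n ^+ 2 ->
  0 <= fv -> 0 <= r -> 0 <= th -> 0 <= dth ->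
  fv <= 2 * dth * (xi ^+ 2 + th ^+ 2) ->
  fv * r <= t * fv + dth * (xi ^+ 2 + 1) / n *
                     ((4 / s + 16 / s ^+ 2) * expR (s * r) + th ^+ 4).
Proof.
move=> s0 t0 n1 hn fv0 r0 th0 d0 hfv.
have n0 : 0 < n by lra.
have xi0 : 0 <= xi ^+ 2 by exact: sqr_ge0.
set e := expR (s * r).
have e0 : 0 <= e by exact: expR_ge0.
have u0 : 0 <= dth * (xi ^+ 2 + 1) / n.
  by apply: divr_ge0; [apply: mulr_ge0; lra | lra].
have Kge : 0 <= (4 / s + 16 / s ^+ 2) * e + th ^+ 4.
  apply: addr_ge0; last exact: exprn_ge0.
  apply: mulr_ge0 => //; apply: addr_ge0; apply: divr_ge0; try lra; exact: sqr_ge0.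
have [rt|tr] := leP r t.
  have : fv * r <= t * fv by rewrite [t * _]mulrC; apply: ler_wpM2l.
  have := mulr_ge0 u0 Kge. lra.
set E := expR (s * r / 2).
have hE : E * n ^+ 2 <= e.
  rewrite /e /E {2}(_ : s * r = s * r / 2 + s * r / 2); last by field.
  rewrite expRD -hn; apply: ler_wpM2l; first exact: expR_ge0.
  rewrite ler_expR; apply: ler_wpM2r; first lra.
  by apply: ler_wpM2l; lra.
have n2 : n <= n ^+ 2 by rewrite expr2; nra.
have hE' : E * n <= e.
  apply: le_trans hE; apply: ler_wpM2l; first exact: expR_ge0. done.
have hE1 : E <= e / n ^+ 2 by rewrite ler_pdivlMr ?exprn_gt0.
have hE2 : E <= e / n by rewrite ler_pdivlMr.
have f1 := F1 s r s0 r0. have f2 := F2 s r s0 r0. rewrite -/E in f1 f2.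
have h2 : 2 * dth * xi ^+ 2 * r <= dth * (xi ^+ 2 + 1) / n * (4 / s * e).
  have : r <= 2 / s * (e / n).
    apply: le_trans f1 _; apply: ler_wpM2l => //; apply: divr_ge0; lra.
  move=> hr.
  have -> : dth * (xi ^+ 2 + 1) / n * (4 / s * e) = 2 * dth * (xi ^+ 2 + 1) * (2 / s * (e / n)).
    by field; apply/andP; split; lra.
  apply: ler_pM => //.
  - by apply: mulr_ge0 => //; apply: mulr_ge0 => //; lra.
  - by apply: ler_wpM2l; [apply: mulr_ge0 => //; lra | lra].
have h3 : 2 * dth * th ^+ 2 * r <= dth * (xi ^+ 2 + 1) / n * (16 / s ^+ 2 * e + th ^+ 4).
  have amgm : 2 * th ^+ 2 * r <= th ^+ 4 / n + n * r ^+ 2.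
    have -> : th ^+ 4 / n + n * r ^+ 2 = (th ^+ 4 + n ^+ 2 * r ^+ 2) / n by field; lra.
    rewrite ler_pdivlMr //.
    have : 0 <= (th ^+ 2 - n * r) ^+ 2 by exact: sqr_ge0.
    have -> : th ^+ 4 = (th ^+ 2) ^+ 2 by rewrite -exprM.
    move=> h; have -> : (th ^+ 2) ^+ 2 + n ^+ 2 * r ^+ 2 = (th ^+ 2 - n * r) ^+ 2 + 2 * th ^+ 2 * r * n by ring.
    lra.
  have nr : n * r ^+ 2 <= 16 / s ^+ 2 * e / n.
    have : n * r ^+ 2 <= n * (16 / s ^+ 2 * (e / n ^+ 2)).
      apply: ler_wpM2l; first lra.
      apply: le_trans f2 _; apply: ler_wpM2l => //; apply: divr_ge0; [lra|exact: sqr_ge0].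
    have -> : n * (16 / s ^+ 2 * (e / n ^+ 2)) = 16 / s ^+ 2 * e / n by field; apply/andP; split; lra.
    done.
  have A : 2 * dth * th ^+ 2 * r <= dth * ((16 / s ^+ 2 * e + th ^+ 4) / n).
    have -> : 2 * dth * th ^+ 2 * r = dth * (2 * th ^+ 2 * r) by ring.
    apply: ler_wpM2l => //.
    have -> : (16 / s ^+ 2 * e + th ^+ 4) / n = th ^+ 4 / n + 16 / s ^+ 2 * e / n by field; lra.
    lra.
  apply: le_trans A _.
  have -> : dth * (xi ^+ 2 + 1) / n * (16 / s ^+ 2 * e + th ^+ 4) = (xi ^+ 2 + 1) * (dth * ((16 / s ^+ 2 * e + th ^+ 4) / n)) by field; lra.
  rewrite -[X in X <= _]mul1r; apply: ler_wpM2r; last lra.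
  apply: mulr_ge0 => //; apply: divr_ge0; last lra.
  apply: addr_ge0; last exact: exprn_ge0.
  apply: mulr_ge0 => //; apply: divr_ge0; [lra|exact: sqr_ge0].
have h1 : fv * r <= 2 * dth * xi ^+ 2 * r + 2 * dth * th ^+ 2 * r.
  have -> : 2 * dth * xi ^+ 2 * r + 2 * dth * th ^+ 2 * r = 2 * dth * (xi ^+ 2 + th ^+ 2) * r by ring.
  by apply: ler_wpM2r.
have tf : 0 <= t * fv by apply: mulr_ge0.
have -> : dth * (xi ^+ 2 + 1) / n * ((4 / s + 16 / s ^+ 2) * e + th ^+ 4) =
  dth * (xi ^+ 2 + 1) / n * (4 / s * e) + dth * (xi ^+ 2 + 1) / n * (16 / s ^+ 2 * e + th ^+ 4) by ring.
lra.
Qed.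
End K.
Arguments key {R}.

Definition dr {R : realType} {dT : measure_display} {T : measurableType dT}
  (p q : T -> R) (x : T) : R := if p x == 0 then 0 else q x / p x.


Lemma le_linf (R : realType) (k : nat) (v : 'rV[R]_k) (i : 'I_k) : `|v ord0 i| <= linf v.
Proof.
rewrite /linf; have : i \in index_enum 'I_k by rewrite mem_index_enum.
elim: (index_enum 'I_k) => // j s IH; rewrite in_cons big_cons le_max.
by case/orP => [/eqP ->|/IH ->]; rewrite ?lexx ?orbT.
Qed.
Arguments le_linf {R k}.

Lemma sqnorm2_bound (R : realType) (k : nat) (v w : 'rV[R]_k) (c : R) :
  linf v <= c -> sqnorm2 (v - w) <= 2 * k%:R * (c ^+ 2 + linf w ^+ 2).
Proof.
move=> hv; rewrite /sqnorm2.
apply: (@le_trans _ _ (\sum_(i < k) (2 * (c ^+ 2 + linf w ^+ 2)))).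
  apply: ler_sum => i _; rewrite !mxE.
  have := le_trans (le_linf v i) hv; rewrite ler_norml => /andP[a1 a2].
  have := le_linf w i; rewrite ler_norml => /andP[b1 b2].
  have l0 : 0 <= linf w by apply: le_trans (le_linf w i); exact: normr_ge0.
  have ha : v ord0 i ^+ 2 <= c ^+ 2 by rewrite !expr2; nra.
  have hb : w ord0 i ^+ 2 <= linf w ^+ 2 by rewrite !expr2; nra.
  have : 0 <= (v ord0 i + w ord0 i) ^+ 2 by exact: sqr_ge0.
  rewrite !expr2 in ha hb *; nra.
rewrite sumr_const card_ord -mulr_natr; lra.
Qed.

Arguments sqnorm2_bound {R k}.

Lemma main_gen (R : realType) (dT : measure_display) (T : measurableType dT)
  (mu : {sigma_finite_measure set T -> \bar R}) (dth : nat)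
  (p q : T -> R) (theta0 : T -> 'rV[R]_dth)
  (dO : measure_display) (Omega : measurableType dO) (P : probability Omega R)
  (thetahat : nat -> Omega -> T -> 'rV[R]_dth) (xi : nat -> R) :
  measurable_fun setT p -> (forall x, 0 <= p x) ->
  measurable_fun setT q -> (forall x, 0 <= q x) ->
  (forall x, 0 < q x -> 0 < p x) ->
  (forall i, measurable_fun setT (fun x => theta0 x ord0 i)) ->
  (forall N i, measurable_fun setT
      (fun z : Omega * T => thetahat N z.1 z.2 ord0 i)) ->
  (forall N, (1 <= N)%N ->
     {ae P, forall w, {ae mu, forall x,
        0 < p x -> linf (thetahat N w x) <= xi N}}) ->
  (\int[mu]_x ((linf (theta0 x)) ^+ 4 * p x)%:E < +oo)%E ->
  (exists2 s : R, 0 < s &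
     (\int[mu]_x (expR (s * `|dr p q x|) * p x)%:E < +oo)%E) ->
  exists c1 c2 : R, [/\ 0 < c1, 0 < c2 & forall N : nat, (2 <= N)%N ->
    let Et := (\int[P]_w \int[mu]_x
                 (sqnorm2 (thetahat N w x - theta0 x) * q x)%:E)%E in
    let Esr := (\int[P]_w \int[mu]_x
                 (sqnorm2 (thetahat N w x - theta0 x) * dr p q x * p x)%:E)%E in
    let Es := (\int[P]_w \int[mu]_x
                 (sqnorm2 (thetahat N w x - theta0 x) * p x)%:E)%E in
    Et = Esr /\
    (Esr <= c1%:E * Es * (ln N%:R)%:E
            + (c2 * dth%:R * (xi N ^+ 2 + 1) / N%:R)%:E)%E].
Proof.
move=> mp p0 mq q0 qp mth mthh Hi Hii [s s0 Hiii].
have drE x : dr p q x = q x / p x.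
  by rewrite /dr; case: eqP => // ->; rewrite invr0 mulr0.
have r0 x : 0 <= dr p q x by rewrite drE; apply: divr_ge0.
have rp x : dr p q x * p x = q x.
  rewrite drE; have [px0|pn0] := eqVneq (p x) 0.
    rewrite px0 mulr0; have := q0 x; rewrite le_eqVlt => /orP[/eqP //|/qp].
    by rewrite px0 ltxx.
  by rewrite divfK.
have mdr : measurable_fun setT (dr p q).
  rewrite (_ : dr p q = (fun x => q x * (p x)^-1)); last by apply/funext => x; rewrite drE.
  apply: measurable_funM => //; exact: measurableT_comp (measurable_inv R) mp.
have mthi : measurable_fun setT (fun x => linf (theta0 x)).
  exact: (measurable_bigmax (fun i x => theta0 x ord0 i)).
set M := fine (\int[mu]_x (expR (s * `|dr p q x|) * p x)%:E)%E.
set A := fine (\int[mu]_x ((linf (theta0 x)) ^+ 4 * p x)%:E)%E.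
have IM0 : (0 <= \int[mu]_x (expR (s * `|dr p q x|) * p x)%:E)%E.
  by apply: integral_ge0 => x _; rewrite lee_fin mulr_ge0 // expR_ge0.
have linf0 (k : nat) (v : 'rV[R]_k) : 0 <= linf v.
  rewrite /linf; elim/big_ind: _ => //.
  by move=> a b a0 b0; rewrite le_max a0.
have IA0 : (0 <= \int[mu]_x ((linf (theta0 x)) ^+ 4 * p x)%:E)%E.
  by apply: integral_ge0 => x _; rewrite lee_fin mulr_ge0 // exprn_ge0.
have ME : (\int[mu]_x (expR (s * `|dr p q x|) * p x)%:E)%E = M%:E.
  by rewrite fineK // ge0_fin_numE.
have AE : (\int[mu]_x ((linf (theta0 x)) ^+ 4 * p x)%:E)%E = A%:E.
  by rewrite fineK // ge0_fin_numE.
have M0 : 0 <= M by rewrite /M fine_ge0.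
have A0 : 0 <= A by rewrite /A fine_ge0.
set K := 4 / s + 16 / s ^+ 2.
have K0 : 0 <= K by rewrite /K; apply: addr_ge0; apply: divr_ge0; rewrite ?sqr_ge0 //; lra.
exists (4 / s), (K * M + A + 1); split.
- by apply: divr_gt0 => //; lra.
- by have := mulr_ge0 K0 M0; lra.
move=> N N2; cbv zeta.
set fv := fun w x => sqnorm2 (thetahat N w x - theta0 x).
have fv0 w x : 0 <= fv w x.
  by rewrite /fv /sqnorm2; apply: sumr_ge0 => i _; exact: sqr_ge0.
have mfv : measurable_fun setT (fun z : Omega * T => fv z.1 z.2).
  rewrite (_ : (fun z : Omega * T => fv z.1 z.2) = (fun z => \sum_(i < dth)
     (thetahat N z.1 z.2 ord0 i - theta0 z.2 ord0 i) ^+ 2)); last first.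
    by apply/funext => z; rewrite /fv /sqnorm2; apply: eq_bigr => i _; rewrite !mxE.
  apply: measurable_sum => i; apply: measurable_funX; apply: measurable_funB.
    exact: mthh.
  exact: measurableT_comp (mth i) measurable_snd.
have mfvw w : measurable_fun setT (fv w) := measurable_fun_pair2 w mfv.
split.
  apply: eq_integral => w _; apply: eq_integral => x _.
  by rewrite -mulrA rp.
have n1 : 1 <= (N%:R : R) by rewrite ler1n; exact: leq_trans _ N2.
have n2 : 1 < (N%:R : R) by rewrite ltr1n.
have N1 : (1 <= N)%N by exact: leq_trans _ N2.
set n := (N%:R : R).
set L := ln n.
have L0 : 0 < L := ln_gt0 n2.
set t := 4 / s * L.
have t0 : 0 <= t by apply: mulr_ge0; [apply: divr_ge0; lra | lra].
have hn : expR (s * t / 2) = n ^+ 2.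
  have -> : s * t / 2 = 2%:R * L by rewrite /t; field; rewrite gt_eqF.
  by rewrite expRM_natl lnK // posrE; lra.
set CN := dth%:R * (xi N ^+ 2 + 1) / n.
have CN0 : 0 <= CN.
  apply: divr_ge0; last lra.
  by apply: mulr_ge0; [exact: ler0n | have := sqr_ge0 (xi N); lra].
have me : measurable_fun setT (fun x => expR (s * `|dr p q x|) * p x).
  apply: measurable_funM => //; apply: measurableT_comp => //.
  apply: measurable_funM => //; apply: measurableT_comp => //.
have mh : measurable_fun setT (fun x => linf (theta0 x) ^+ 4 * p x).
  by apply: measurable_funM => //; exact: measurable_funX.
have Hint : (\int[mu]_x ((K * (expR (s * `|dr p q x|) * p x)
                 + linf (theta0 x) ^+ 4 * p x)%:E) = (K * M + A)%:E)%E.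
  under eq_integral do rewrite EFinD EFinM.
  rewrite ge0_integralD //; last 4 first.
  - by move=> x _; rewrite -EFinM lee_fin mulr_ge0 // mulr_ge0 // expR_ge0.
  - by apply: measurable_funeM; exact/measurable_EFinP.
  - by move=> x _; rewrite lee_fin mulr_ge0 // exprn_ge0.
  - exact/measurable_EFinP.
  by rewrite ge0_integralZl_EFin //; [rewrite ME AE | move=> x _; rewrite lee_fin mulr_ge0 // expR_ge0 | exact/measurable_EFinP].
have mfp w : measurable_fun setT (fun x => fv w x * p x) by exact: measurable_funM.
have inner w : {ae mu, forall x, 0 < p x -> linf (thetahat N w x) <= xi N} ->
  (\int[mu]_x (fv w x * dr p q x * p x)%:E <=
     t%:E * \int[mu]_x (fv w x * p x)%:E + (CN * (K * M + A))%:E)%E.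
  move=> Hw.
  apply: (@le_trans _ _ (\int[mu]_x ((t * (fv w x * p x)) + CN * (K * (expR (s * `|dr p q x|) * p x)
                 + linf (theta0 x) ^+ 4 * p x))%:E)%E).
    apply: ae_ge0_le_integral => //.
    - by move=> x _; rewrite lee_fin mulr_ge0 // mulr_ge0.
    - by apply/measurable_EFinP; apply: measurable_funM => //; exact: measurable_funM.
    - move=> x _; rewrite lee_fin addr_ge0 //; first by apply: mulr_ge0 => //; exact: mulr_ge0.
      apply: mulr_ge0 => //; apply: addr_ge0; last by rewrite mulr_ge0 // exprn_ge0.
      by rewrite mulr_ge0 // mulr_ge0 // expR_ge0.
    - apply/measurable_EFinP; apply: measurable_funD.
        exact: measurable_funM.
      apply: measurable_funM => //; apply: measurable_funD => //.
      exact: measurable_funM.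
    apply: filterS Hw => x Hx _; rewrite lee_fin.
    have [px0|ppos] : p x = 0 \/ 0 < p x.
      by have := p0 x; rewrite le_eqVlt => /orP[/eqP ->|->]; [left|right].
      by rewrite px0 !(mulr0, addr0).
    have hfv : fv w x <= 2 * dth%:R * (xi N ^+ 2 + linf (theta0 x) ^+ 2).
      exact: sqnorm2_bound (Hx ppos).
    have hk := key s t n (fv w x) (dr p q x) (linf (theta0 x)) (xi N) dth%:R
      s0 t0 n1 hn (fv0 w x) (r0 x) (linf0 _ _) (ler0n _ _) hfv.
    apply: le_trans (ler_wpM2r (p0 x) hk) _.
    rewrite ger0_norm // /CN /K le_eqVlt; apply/orP; left; apply/eqP; ring.
  under eq_integral do rewrite EFinD EFinM.
  rewrite ge0_integralD //; last 4 first.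
  - by move=> x _; rewrite -EFinM lee_fin mulr_ge0 // mulr_ge0.
  - by apply: measurable_funeM; exact/measurable_EFinP.
  - move=> x _; rewrite lee_fin; apply: mulr_ge0 => //; apply: addr_ge0; last by rewrite mulr_ge0 // exprn_ge0.
    by rewrite mulr_ge0 // mulr_ge0 // expR_ge0.
  - apply/measurable_EFinP; apply: measurable_funM => //; apply: measurable_funD => //.
    exact: measurable_funM.
  rewrite ge0_integralZl_EFin //; last 2 first.
  - by move=> x _; rewrite lee_fin mulr_ge0.
  - exact/measurable_EFinP.
  rewrite (_ : (\int[mu]_x (CN * (K * (expR (s * `|dr p q x|) * p x)
                 + linf (theta0 x) ^+ 4 * p x))%:E)%E = (CN%:E * \int[mu]_x ((K * (expR (s * `|dr p q x|) * p x)
                 + linf (theta0 x) ^+ 4 * p x))%:E)%E); last first.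
    rewrite -ge0_integralZl_EFin //; last 2 first.
    - move=> x _; rewrite lee_fin; apply: addr_ge0; last by rewrite mulr_ge0 // exprn_ge0.
      by rewrite mulr_ge0 // mulr_ge0 // expR_ge0.
    - by apply/measurable_EFinP; apply: measurable_funD => //; exact: measurable_funM.
  by rewrite Hint -EFinM.
have mG : measurable_fun setT (fun w => \int[mu]_x (fv w x * dr p q x * p x)%:E)%E.
  apply: (measurable_fun_fubini_tonelli_F (m2 := mu)
    (fun z : Omega * T => (fv z.1 z.2 * dr p q z.2 * p z.2)%:E)).
  - apply/measurable_EFinP; apply: measurable_funM; last exact: measurableT_comp mp measurable_snd.
    by apply: measurable_funM => //; exact: measurableT_comp mdr measurable_snd.
  - by move=> z; rewrite lee_fin mulr_ge0 // mulr_ge0.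
have mF : measurable_fun setT (fun w => \int[mu]_x (fv w x * p x)%:E)%E.
  apply: (measurable_fun_fubini_tonelli_F (m2 := mu)
    (fun z : Omega * T => (fv z.1 z.2 * p z.2)%:E)).
  - apply/measurable_EFinP; apply: measurable_funM => //.
    exact: measurableT_comp mp measurable_snd.
  - by move=> z; rewrite lee_fin mulr_ge0.
have C0 : 0 <= CN * (K * M + A) by apply: mulr_ge0 => //; apply: addr_ge0 => //; exact: mulr_ge0.
apply: (@le_trans _ _ (\int[P]_w (t%:E * \int[mu]_x (fv w x * p x)%:E + (CN * (K * M + A))%:E))%E).
  apply: ae_ge0_le_integral => //.
  - by move=> w _; apply: integral_ge0 => x _; rewrite lee_fin; apply: mulr_ge0; [apply: mulr_ge0; [exact: fv0 | exact: r0] | exact: p0].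
  - move=> w _; apply: adde_ge0; last by rewrite lee_fin.
    by apply: mule_ge0; [rewrite lee_fin | apply: integral_ge0 => x _; rewrite lee_fin mulr_ge0].
  - by apply: emeasurable_funD; [exact: measurable_funeM | exact: measurable_cst].
  by apply: filterS (Hi N N1) => w Hw _; exact: inner w Hw.
rewrite ge0_integralD //; last 2 first.
  - by move=> w _; apply: mule_ge0; [rewrite lee_fin | apply: integral_ge0 => x _; rewrite lee_fin; apply: mulr_ge0; [exact: fv0 | exact: p0]].
  - exact: measurable_funeM.
rewrite ge0_integralZl_EFin //; last first.
  by move=> w _; apply: integral_ge0 => x _; rewrite lee_fin; apply: mulr_ge0; [exact: fv0 | exact: p0].
rewrite integral_cst // [X in (_ + _ * X <= _)%E](_ : _ = 1%E); last exact: probability_setT.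
rewrite mule1.
rewrite /t EFinM muleAC; apply: leeD; first exact: lexx.
rewrite lee_fin.
have -> : (K * M + A + 1) * dth%:R * (xi N ^+ 2 + 1) / n = (K * M + A + 1) * CN.
  by rewrite /CN; field; rewrite gt_eqF // (lt_le_trans _ n1).
rewrite mulrC; apply: ler_wpM2r => //; lra.
Qed.

Section PM.
Local Open Scope ereal_scope.
Context d1 d2 (T1 : measurableType d1) (T2 : measurableType d2) (R : realType).
Variable m1 : {sigma_finite_measure set T1 -> \bar R}.
Variable m2 : {sigma_finite_measure set T2 -> \bar R}.
Definition pm : set (T1 * T2) -> \bar R := (m1 \x m2)%E.
HB.instance Definition _ := Measure.on pm.
Lemma pm_sigma_finite : sigma_finite setT pm.
Proof.
have /sigma_finiteP[F [TF ndF Foo]] := sigma_finiteT m1.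
have /sigma_finiteP[G [TG ndG Goo]] := sigma_finiteT m2.
exists (fun n => F n `*` G n).
 rewrite -setXTT TF TG predeqE => -[x y]; split.
    move=> [/= [n _ Fnx] [k _ Gky]]; exists (maxn n k) => //; split.
    - by move: x Fnx; exact/subsetPset/ndF/leq_maxl.
    - by move: y Gky; exact/subsetPset/ndG/leq_maxr.
  by move=> [n _ []/= ? ?]; split; exists n.
move=> k; have [? ?] := Foo k; have [? ?] := Goo k.
split; first exact: measurableX.
by rewrite /pm product_measure1E// lte_mul_pinfty// ge0_fin_numE.
Qed.
HB.instance Definition _ := Measure_isSigmaFinite.Build _ _ _ pm pm_sigma_finite.
End PM.

Section S.
Variable R : realType.
Lemma lebRpow_sf n : exists m : {sigma_finite_measure set (Rpow R n) -> \bar R},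
  lebRpow R n = m.
Proof.
elim: n => [|n [m Hm]].
  by exists (@dirac _ unit tt R).
exists (SigmaFiniteMeasure.clone _ _ _ (@pm _ _ _ _ R (@lebesgue_measure R) m) _).
by rewrite /= Hm.
Qed.
End S.

Theorem corollary4p2 (R : realType) (d dth : nat)
  (p q : Rpow R d -> R) (theta0 : Rpow R d -> 'rV[R]_dth)
  (dO : measure_display) (Omega : measurableType dO) (P : probability Omega R)
  (thetahat : nat -> Omega -> Rpow R d -> 'rV[R]_dth) (xi : nat -> R) :
  is_density p -> is_density q ->
  (forall x, 0 < q x -> 0 < p x) ->
  (forall i, measurable_fun setT (fun x => theta0 x ord0 i)) ->
  (forall N i, measurable_fun setT
      (fun z : Omega * Rpow R d => thetahat N z.1 z.2 ord0 i)) ->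
  (* (i) ||thetahat_N(X^s)||_oo <= xi_N almost surely, for every N >= 1 *)
  (forall N, (1 <= N)%N ->
     {ae P, forall w, {ae lebRpow R d, forall x,
        0 < p x -> linf (thetahat N w x) <= xi N}}) ->
  (* (ii) E ||theta0(X^s)||_oo^4 < oo *)
  (\int[lebRpow R d]_x ((linf (theta0 x)) ^+ 4 * p x)%:E < +oo)%E ->
  (* (iii) r0(X^s) is sub-exponentially distributed *)
  (exists2 s : R, 0 < s &
     (\int[lebRpow R d]_x (expR (s * `|dratio p q x|) * p x)%:E < +oo)%E) ->
  exists c1 c2 : R, [/\ 0 < c1, 0 < c2 & forall N : nat, (2 <= N)%N ->
    let Et := (\int[P]_w \int[lebRpow R d]_x
                 (sqnorm2 (thetahat N w x - theta0 x) * q x)%:E)%E in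
    let Esr := (\int[P]_w \int[lebRpow R d]_x
                 (sqnorm2 (thetahat N w x - theta0 x) * dratio p q x * p x)%:E)%E in
    let Es := (\int[P]_w \int[lebRpow R d]_x
                 (sqnorm2 (thetahat N w x - theta0 x) * p x)%:E)%E in
    Et = Esr /\
    (Esr <= c1%:E * Es * (ln N%:R)%:E
            + (c2 * dth%:R * (xi N ^+ 2 + 1) / N%:R)%:E)%E].
Proof.
move=> [mp p0 _] [mq q0 _] qp mth mthh Hi Hii Hiii.
have [m Hm] := lebRpow_sf R d.
have E : dratio p q = dr p q by [].
rewrite Hm E in Hi Hii Hiii *.
exact: (@main_gen R _ _ m dth p q theta0 _ Omega P thetahat xi mp p0 mq q0 qp mth mthh Hi Hii Hiii).
Qed.
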